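(* Assume $V=W$, that $\mathcal{A}$ is coercive, i.e. there is $\alpha>0$ with $\alpha\|\phi\|_W^2\le \mathcal{A}(\phi,\phi)$ for all $\phi\in W$, and that $W_\theta\cup S_\theta\subseteq V_\eta$. Let $(w^n_\theta)_{n\ge1}\subset W_\theta$ be a minimizing sequence, i.e. $\lim_{n\to\infty}\|u-w^n_\theta\|_{op,\eta}=\sigma^*:=\inf_{w_\theta\in W_\theta}\|u-w_\theta\|_{op,\eta}$. Then $(w^n_\theta)$ has a subsequence converging weakly in $W$ to some $u^*_\theta\in \mathrm{cl}^{seq}_w(W_\theta)$, and every such weak limit satisfies $$\|u-u^*_\theta\|_{op,\eta}\le \inf_{w_\theta\in W_\theta}\|u-w_\theta\|_{op,\eta}.$$
   Context: $W$ and $V$ are reflexive separable real Banach spaces. $\mathcal{A}:W\times V\to\mathbb{R}$ is a bilinear form with $\mathcal{A}(w,v)\le M\|w\|_W\|v\|_V$ for all $w\in W,v\in V$, and $\mathcal{F}:V\to\mathbb{R}$ is a bounded linear functional. It is assumed that there is a unique $u\in W$ with $\mathcal{A}(u,v)=\mathcal{F}(v)$ for all $v\in V$. $W_\theta\subseteq W$ and $V_\eta\subseteq V$ are arbitrary subsets (''function classes'', e.g. neural network classes), with $V_\eta$ containing an element of nonzero norm. For $w\in W$, $\|w\|_{op,\eta}:=\sup_{v_\eta\in V_\eta,\ \|v_\eta\|_V\neq0}\mathcal{A}(w,v_\eta)/\|v_\eta\|_V$. $S_\theta:=\{w_1-w_2:\ w_1,w_2\in W_\theta\}$. $\mathrm{cl}^{seq}_w(W_\theta)\subseteq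 W$ denotes the weak sequential closure of $W_\theta$ in $W$, i.e. the set of all weak limits in $W$ of sequences of elements of $W_\theta$. *)

(* Defs.v *)
From HB Require Import structures.
From mathcomp Require Import all_boot all_order all_algebra.
From mathcomp Require Import all_classical all_reals all_analysis.
Set Implicit Arguments. Unset Strict Implicit. Unset Printing Implicit Defensive.
Import Order.TTheory GRing.Theory Num.Theory.
Import numFieldNormedType.Exports.
Local Open Scope classical_set_scope.
Local Open Scope ring_scope.

Section Defs.
Variables (R : realType) (W : normedModType R).

Definition lin_fun (f : W -> R) : Prop :=
  forall (a : R) (x y : W), f (a *: x + y) = a * f x + f y.

Definition bdd_fun (f : W -> R) : Prop :=
  exists M : R, forall x : W, `|f x| <= M * `|x|.

Definition dual_elem (f : W -> R) : Prop := lin_fun f /\ bdd_fun f.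

(* W is reflexive: every bounded linear functional Phi on W* (bounded w.r.t.
   the dual norm, expressed via admissible bounds M of f) is the evaluation
   at some element of W. *)
Definition reflexive_space : Prop :=
  forall Phi : (W -> R) -> R,
    (forall (a : R) (f g : W -> R), dual_elem f -> dual_elem g ->
        Phi (fun x => a * f x + g x) = a * Phi f + Phi g) ->
    (exists C : R, forall (f : W -> R) (M : R), dual_elem f -> 0 <= M ->
        (forall x, `|f x| <= M * `|x|) -> `|Phi f| <= C * M) ->
    exists w : W, forall f, dual_elem f -> Phi f = f w.

Definition separable_space : Prop :=
  exists s : nat -> W, forall (x : W) (e : R), 0 < e ->
    exists n, `|x - s n| < e.

Definition weak_cvg (x : nat -> W) (l : W) : Prop :=
  forall f : W -> R, dual_elem f -> (fun n => f (x n)) @ \oo --> f l.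

Definition weak_seq_closure (S : set W) : set W :=
  [set l | exists x : nat -> W, (forall n, S (x n)) /\ weak_cvg x l].

Definition bilinear_form (A : W -> W -> R) : Prop :=
  (forall (a : R) (x y v : W), A (a *: x + y) v = a * A x v + A y v) /\
  (forall (a : R) (w x y : W), A w (a *: x + y) = a * A w x + A w y).

Definition opnorm (A : W -> W -> R) (Veta : set W) (w : W) : R :=
  sup [set A w v / `|v| | v in [set v | Veta v /\ `|v| != 0]].

Definition diff_set (S : set W) : set W :=
  [set w | exists w1 w2, S w1 /\ S w2 /\ w = w1 - w2].

End Defs.

(* Main.v *)
Require Import Defs.
From HB Require Import structures.
From mathcomp Require Import all_boot all_order all_algebra.
From mathcomp Require Import all_classical all_reals all_analysis.
From mathcomp Require Import ring lra.
Set Implicit Arguments. Unset Strict Implicit. Unset Printing Implicit Defensive.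
Import Order.TTheory GRing.Theory Num.Theory.
Import numFieldNormedType.Exports.
Local Open Scope classical_set_scope.
Local Open Scope ring_scope.
Lemma bilB1 (R : realType) (W : normedModType R) (A : W -> W -> R) :
  bilinear_form A -> forall x y v, A (x - y) v = A x v - A y v.
Proof.
move=> [l1 _] x y v; have := l1 (-1) y x.
by rewrite scaleN1r addrC => ->; rewrite mulN1r addrC.
Qed.

Lemma bilB2 (R : realType) (W : normedModType R) (A : W -> W -> R) :
  bilinear_form A -> forall w x y, A w (x - y) = A w x - A w y.
Proof.
move=> [_ l2] w x y; have := l2 (-1) w y x.
by rewrite scaleN1r addrC => ->; rewrite mulN1r addrC.
Qed.

Lemma bil0 (R : realType) (W : normedModType R) (A : W -> W -> R) :
  bilinear_form A -> forall v, A 0 v = 0.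
Proof. by move=> hA v; have := bilB1 hA 0 0 v; rewrite !subrr. Qed.

Lemma bilN1 (R : realType) (W : normedModType R) (A : W -> W -> R) :
  bilinear_form A -> forall x v, A (- x) v = - A x v.
Proof. by move=> hA x v; rewrite -sub0r bilB1 // bil0 // sub0r. Qed.

Lemma bil_abs (R : realType) (W : normedModType R) (A : W -> W -> R) M :
  bilinear_form A -> (forall w v : W, A w v <= M * `|w| * `|v|) ->
  forall w v, `|A w v| <= `|M| * `|v| * `|w|.
Proof.
move=> hA hM w v; rewrite ler_norml; apply/andP; split.
  rewrite lerNl -bilN1 //; apply: le_trans (hM _ _) _; rewrite normrN.
  by rewrite mulrAC ler_wpM2r // ler_wpM2r // ler_norm.
apply: le_trans (hM _ _) _.
by rewrite mulrAC ler_wpM2r // ler_wpM2r // ler_norm.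
Qed.

Lemma bil_dual (R : realType) (W : normedModType R) (A : W -> W -> R) M :
  bilinear_form A -> (forall w v : W, A w v <= M * `|w| * `|v|) ->
  forall v, dual_elem (fun x => A x v).
Proof.
move=> hA hM v; split; first by move=> a x y; case: hA => l1 _; exact: l1.
by exists (`|M| * `|v|) => x; exact: bil_abs.
Qed.

Lemma opnorm_ge (R : realType) (W : normedModType R) (A : W -> W -> R) M
  (Veta : set W) :
  bilinear_form A -> (forall w v : W, A w v <= M * `|w| * `|v|) ->
  forall w v, Veta v -> `|v| != 0 -> A w v <= opnorm A Veta w * `|v|.
Proof.
move=> hA hM w v Vv nv.
have vp : 0 < `|v| by rewrite lt_neqAle eq_sym nv normr_ge0.
rewrite -ler_pdivrMr //; apply: sup_upper_bound; last by exists v.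
split; first by exists (A w v / `|v|), v.
exists (`|M| * `|w|) => _ [x [Vx nx] <-].
have xp : 0 < `|x| by rewrite lt_neqAle eq_sym nx normr_ge0.
rewrite ler_pdivrMr //; apply: le_trans (ler_norm _) _.
by apply: le_trans (bil_abs hA hM _ _) _; rewrite mulrAC.
Qed.
Lemma ultra_lim (R : realType) (G : set_system nat) (GU : UltraFilter G)
  (y : nat -> R) (B : R) : (forall n, `|y n| <= B) ->
  exists l, y @ G --> l /\ `|l| <= B.
Proof.
move=> hB.
have GI : G (y @^-1` [set` `[-B, B]]).
  apply: filterS (@filterT _ G _) => n _ /=.
  by rewrite in_itv /= -ler_norml.
have [p [Ip clp]] := @segment_compact R (-B) B (y @ G) _ GI.
exists p; split; last by move: Ip => /=; rewrite in_itv /= -ler_norml.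
move=> N Np /=.
case: (in_ultra_setVsetC (y @^-1` N) GU) => // Gc.
by have [x [/= xn xN]] := clp (~` N) N Gc Np.
Qed.
Lemma ultra_rep (R : realType) (W : normedModType R) (G : set_system nat)
  (GU : UltraFilter G) (y : nat -> W) (B : R) :
  reflexive_space W -> (forall n, `|y n| <= B) ->
  exists z, forall f, dual_elem f -> (fun n => f (y n)) @ G --> f z.
Proof.
move=> hR hB.
have aux : forall (f : W -> R) (Mf : R), 0 <= Mf -> (forall x, `|f x| <= Mf * `|x|) ->
    exists l : R, (fun n => f (y n)) @ G --> l /\ `|l| <= Mf * B.
  move=> f Mf M0 hf; apply: ultra_lim => n.
  by apply: le_trans (hf _) _; rewrite ler_wpM2l.
have auxd : forall f : W -> R, dual_elem f -> exists l : R, (fun n => f (y n)) @ G --> l.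
  move=> f [_ [Mf hf]].
  have [|l [hl _]] := aux f `|Mf| (normr_ge0 _); last by exists l.
  by move=> x; apply: le_trans (hf x) _; rewrite ler_wpM2r // ler_norm.
pose Phi (f : W -> R) := lim ((fun n => f (y n)) @ G).
have PhiE : forall (f : W -> R) (l : R), (fun n => f (y n)) @ G --> l -> Phi f = l.
  by move=> f l hl; apply: cvg_lim.
have [w hw] : exists w : W, forall f, dual_elem f -> Phi f = f w.
  apply: hR.
    move=> a f g df dg.
    have [lf hf] := auxd f df; have [lg hg] := auxd g dg.
    rewrite (PhiE f lf) // (PhiE g lg) //; apply: PhiE.
    by apply: cvgD => //; apply: cvgM => //; exact: cvg_cst.
  exists B => f M df M0 hf.
  have [l [hl lb]] := aux f M M0 hf.
  by rewrite (PhiE f l) // mulrC.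
exists w => f df; rewrite -hw //.
have [l hl] := auxd f df; by rewrite (PhiE f l).
Qed.
Lemma weak_of_sep (R : realType) (W : normedModType R) (y : nat -> W) (B : R)
  (g : nat -> W -> R) :
  reflexive_space W -> (forall n, `|y n| <= B) ->
  (forall k, dual_elem (g k)) ->
  (forall z z', (forall k, g k z = g k z') -> z = z') ->
  (forall k, exists c : R, (fun n => g k (y n)) @ \oo --> c) ->
  exists z, weak_cvg y z.
Proof.
move=> hR hB dg hsep hc.
have trans : forall (G : set_system nat) (h : nat -> R) (l : R),
    \oo `<=` G -> h @ \oo --> l -> h @ G --> l.
  by move=> G h l sG hl S Sl; apply: sG; exact: hl.
have [G1 [U1 s1]] := @ultraFilterLemma nat \oo _.
have [z hz] := ultra_rep U1 hR hB.
have uniq : forall G, UltraFilter G -> \oo `<=` G -> forall z',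
    (forall f, dual_elem f -> (fun n => f (y n)) @ G --> f z') -> z' = z.
  move=> G UG sG z' hz'; apply: hsep => k.
  have [c hck] := hc k.
  have e1 : g k z' = c.
    exact: (cvg_unique _ (hz' _ (dg k)) (trans _ _ _ sG hck)).
  have e2 : g k z = c.
    exact: (cvg_unique _ (hz _ (dg k)) (trans _ _ _ s1 hck)).
  by rewrite e1 e2.
exists z => f df N Nfz /=.
apply: contrapT => hnot.
pose P := [set n | ~ N (f (y n))].
have F2P : ProperFilter (within P \oo).
  apply: Build_ProperFilter_ex => S FS.
  apply: contrapT => hS; apply: hnot.
  suff : \forall n \near \oo, N (f (y n)) by []. move: FS; rewrite /within /= => FS; have FS2 : \forall n \near \oo, P n -> S n := FS; apply: filterS FS2 => n hPS; apply: contrapT => hn; apply: hS; exists n.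
  exact: hPS.
have [G2 [U2 s2]] := @ultraFilterLemma nat (within P \oo) F2P.
have s2' : \oo `<=` G2.
  by move=> S hS; apply: s2; exact: (@cvg_within _ \oo _ P).
have [z2 hz2] := ultra_rep U2 hR hB.
have ez := uniq G2 U2 s2' z2 hz2.
have GN : G2 [set n | N (f (y n))].
  by have := hz2 f df N; rewrite ez; apply.
have GP : G2 P by apply: s2; exact: withinT.
have [n [n1 n2]] := @filter_ex _ _ (@ultra_proper _ _ U2) _ (filterI GN GP).
exact: n2 n1.
Qed.
Fixpoint ext (R : realType) (F : (nat -> R) -> nat -> nat) (c : nat -> nat -> R)
  (k : nat) : nat -> nat :=
  match k with
  | 0 => F (c 0%N)
  | k'.+1 => ext F c k' \o F (c k'.+1 \o ext F c k')
  end.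

Definition sincr (f : nat -> nat) := forall m n, (m < n)%N -> (f m < f n)%N.

Lemma sincr_ge f : sincr f -> forall n, (n <= f n)%N.
Proof.
move=> hf; elim=> [//|n IH]; apply: leq_ltn_trans IH _; exact: hf.
Qed.

Lemma sincr_comp f g : sincr f -> sincr g -> sincr (f \o g).
Proof. by move=> hf hg m n mn; apply: hf; apply: hg. Qed.

Lemma bnd_fun (R : realType) (u : nat -> R) (b : R) :
  (forall n, `|u n| <= b) -> bounded_fun u.
Proof.
move=> hb; rewrite /bounded_near; near=> M => n _ /=.
apply: le_trans (hb n) _; near: M; apply: nbhs_pinfty_ge.
by rewrite num_real.
Unshelve. all: by end_near.
Qed.

Lemma diag (R : realType) (c : nat -> nat -> R) (b : nat -> R) :
  (forall k n, `|c k n| <= b k) ->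
  exists d : nat -> nat, sincr d /\
    forall k, exists l : R, (fun n => c k (d n)) @ \oo --> l.
Proof.
move=> hb.
have bw : forall u : nat -> R, exists f : nat -> nat,
    bounded_fun u -> (sincr f /\ cvgn (u \o f)).
  move=> u; case: (pselect (bounded_fun u)) => hu; last by exists id.
  have [f h1 h2] := bolzano_weierstrass hu; exists f => _; split => //.
  move=> m n mn; have := h1 n m; rewrite !leEnat => e; by rewrite ltnNge e -ltnNge.
have [F hF] := choice bw.
have P1 : forall k, sincr (ext F c k) /\ cvgn (c k \o ext F c k).
  elim=> [|k [IH1 IH2]] /=.
    by apply: hF; apply: (bnd_fun (b := b 0%N)).
  have [h1 h2] := hF (c k.+1 \o ext F c k) (bnd_fun (b := b k.+1) (fun n => hb _ _)).
  by split; [exact: sincr_comp|].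
have P2 : forall k j, exists H, sincr H /\ forall n, ext F c (k + j) n = ext F c k (H n).
  move=> k; elim=> [|j [H [H1 H2]]]; first by exists id; split => // n; rewrite addn0.
  have [h1 _] := hF (c (k + j).+1 \o ext F c (k + j))
     (bnd_fun (b := b (k + j).+1) (fun n => hb _ _)).
  exists (H \o F (c (k + j).+1 \o ext F c (k + j))); split; first exact: sincr_comp.
  by move=> n; rewrite addnS /= H2.
exists (fun n => ext F c n n); split.
  suff : {homo (fun n => ext F c n n) : i j / (i < j)%N >-> (i < j)%N} by move=> h m n; exact: h.
  apply: homo_ltn; first by move=> y x z; apply: ltn_trans.
  move=> i /=.
  have [h1 _] := hF (c i.+1 \o ext F c i)
     (bnd_fun (b := b i.+1) (fun n => hb _ _)).
  apply: (P1 i).1; apply: leq_trans (sincr_ge h1 i.+1); exact: ltnSn.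
move=> k; have [_ /cvg_ex [l hl]] := P1 k; exists l.
move=> S Sl; have [N _ hN] := hl S Sl.
exists (maxn N k) => // n /= hn.
have [H [H1 H2]] := P2 k (n - k)%N.
have kn : (k <= n)%N by apply: leq_trans hn; exact: leq_maxr.
have := H2 n; rewrite subnKC // => ->.
apply: (hN (H n)); apply: leq_trans (sincr_ge H1 n).
apply: leq_trans hn; exact: leq_maxl.
Qed.
Lemma bilN2 (R : realType) (W : normedModType R) (A : W -> W -> R) :
  bilinear_form A -> forall w x, A w (- x) = - A w x.
Proof.
move=> hA w x; rewrite -sub0r bilB2 //.
by have := bilB2 hA w 0 0; rewrite subrr => ->; rewrite subrr sub0r.
Qed.

Lemma real_zero (R : realType) (x al K : R) : 0 <= x -> 0 < al -> 0 <= K ->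
  (forall e, 0 < e -> al * x ^+ 2 <= K * x * e) -> x = 0.
Proof.
move=> x0 al0 K0 h; apply/eqP; rewrite eq_le x0 andbT; rewrite leNgt; apply/negP => xp.
have K1 : 0 < K + 1 by rewrite ltr_wpDl.
have := h (al * x / (K + 1)); rewrite divr_gt0 ?mulr_gt0 // => /(_ isT).
have t0 : 0 < al * x ^+ 2 by rewrite mulr_gt0 // exprn_gt0.
have -> : K * x * (al * x / (K + 1)) = (al * x ^+ 2) * (K / (K + 1)).
  by rewrite expr2; field; rewrite gt_eqF.
rewrite -{1}[al * x ^+ 2]mulr1 ler_pM2l // ler_pdivlMr // mul1r.
by move=> hh; lra.
Qed.

Lemma div_bound (R : realType) (x al K : R) : 0 < x -> 0 < al ->
  al * x ^+ 2 <= K * x -> x <= `|K| / al.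
Proof.
move=> x0 al0 h; rewrite ler_pdivlMr // mulrC.
rewrite expr2 mulrA ler_pM2r // in h; apply: le_trans h _; exact: ler_norm.
Qed.
Theorem lemma1 (R : realType) (W : completeNormedModType R)
  (A : W -> W -> R) (F : W -> R) (M : R) (u : W)
  (Wtheta Veta : set W) (wn : nat -> W) :
  reflexive_space W -> separable_space W ->
  bilinear_form A ->
  (forall w v : W, A w v <= M * `|w| * `|v|) ->
  dual_elem F ->
  (forall v, A u v = F v) ->
  (forall w : W, (forall v, A w v = F v) -> w = u) ->
  (exists v0, Veta v0 /\ `|v0| != 0) ->
  (exists alpha : R, 0 < alpha /\ forall phi : W, alpha * `|phi| ^+ 2 <= A phi phi) ->
  Wtheta `|` diff_set Wtheta `<=` Veta ->
  (forall n, Wtheta (wn n)) ->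
  (fun n => (opnorm A Veta (u - wn n))%:E) @ \oo -->
      ereal_inf [set (opnorm A Veta (u - w))%:E | w in Wtheta] ->
  (exists (phi : nat -> nat) (ustar : W),
      (forall m n, (m < n)%N -> (phi m < phi n)%N) /\
      weak_cvg (wn \o phi) ustar /\ weak_seq_closure Wtheta ustar) /\
  (forall (phi : nat -> nat) (ustar : W),
      (forall m n, (m < n)%N -> (phi m < phi n)%N) ->
      weak_cvg (wn \o phi) ustar ->
      ((opnorm A Veta (u - ustar))%:E <=
         ereal_inf [set (opnorm A Veta (u - w))%:E | w in Wtheta])%E).
Proof.
move=> hR [s hs] hA hM dF hu huniq [v0 [Vv0 nv0]] [al [al0 hal]] sub hW hcv.
set L := ereal_inf _ in hcv *.
pose sig n := opnorm A Veta (u - wn n).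
split.
  have L0 : (L <= (sig 0%N)%:E)%E.
    by apply: ereal_inf_lbound; exists (wn 0%N).
  pose c := sig 0%N + 1.
  have Lc : (L < c%:E)%E.
    by apply: (le_lt_trans L0); rewrite lte_fin ltrDl.
  have [N _ hN] := hcv _ (open_ereal_lt' Lc).
  have sigc : forall n, (N <= n)%N -> sig n <= c.
    by move=> n /hN /=; rewrite lte_fin => /ltW.
  pose B0 := `|wn N| + `|c + c| / al.
  have hB : forall n, `|wn (n + N)%N| <= B0.
    move=> n; pose d := wn (n + N)%N - wn N.
    have -> : wn (n + N)%N = wn N + d by rewrite /d addrC subrK.
    apply: le_trans (ler_normD _ _) _; rewrite lerD2l.
    have [d0|dn0] := eqVneq `|d| 0.
      by rewrite d0 divr_ge0 // ltW.
    have dp : 0 < `|d| by rewrite lt_neqAle eq_sym dn0 normr_ge0.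
    apply: div_bound => //; apply: le_trans (hal d) _.
    have ed : d = (u - wn N) - (u - wn (n + N)%N).
      by rewrite /d opprB [RHS]addrC [RHS]addrA subrK.
    have Vd : Veta d by apply: sub; right; exists (wn (n + N)%N), (wn N).
    have Vnd : Veta (- d).
      by apply: sub; right; exists (wn N), (wn (n + N)%N); rewrite /d opprB.
    rewrite {1}ed bilB1 // -bilN2 //.
    have h1 := opnorm_ge hA hM (u - wn N) Vd dn0.
    have h2 : A (u - wn (n + N)%N) (- d) <= sig (n + N)%N * `|d|.
      by rewrite -(normrN d); apply: opnorm_ge => //; rewrite normrN.
    apply: le_trans (lerD h1 h2) _; rewrite -mulrDl ler_wpM2r //.
    apply: lerD; first exact: (sigc N).
    by apply: sigc; rewrite leq_addl.
  pose y n := wn (n + N)%N.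
  pose g k := fun x => A x (s k).
  have [d [dinc dcv]] := diag (c := fun k n => g k (y n)) (b := fun k => `|M| * `|s k| * B0)
     (fun k n => le_trans (bil_abs hA hM _ _) (ler_wpM2l (mulr_ge0 (normr_ge0 _) (normr_ge0 _)) (hB n))).
  have hsep : forall z z', (forall k, g k z = g k z') -> z = z'.
    move=> z z' hk; apply/eqP; rewrite -subr_eq0 -normr_eq0; apply/eqP.
    apply: (real_zero (normr_ge0 _) al0 (normr_ge0 M)) => ep ep0.
    have [k hk'] := hs (z - z') ep ep0.
    apply: le_trans (hal _) _.
    have e0 : A (z - z') (s k) = 0 by rewrite bilB1 // (hk k : A z (s k) = A z' (s k)) subrr.
    rewrite -[X in A _ X](subrK (s k)) (_ : A (z - z') (z - z' - s k + s k) = A (z - z') (z - z' - s k)).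
      apply: le_trans (ler_norm _) _; apply: le_trans (bil_abs hA hM _ _) _.
      by rewrite mulrAC ler_wpM2l ?mulr_ge0 //; exact: ltW.
    by have := (hA.2 1 (z - z') (z - z' - s k) (s k)); rewrite scale1r mul1r e0 addr0.
  have [z hz] := weak_of_sep (y := y \o d) (B := B0) (g := g) hR (fun n => hB _)
     (fun k => bil_dual hA hM (s k)) hsep dcv.
  exists (fun n => (d n + N)%N), z; split.
    by move=> m n mn; rewrite ltn_add2r; exact: dinc.
  split => //; exists (fun n => wn (d n + N)%N); split => //.
move=> phi ustar hphi hw.
have hsig : (fun n => (sig (phi n))%:E) @ \oo --> L.
  move=> S SL; have [N _ hN] := hcv S SL; exists N => // n /= hn.
  apply: hN; apply: leq_trans hn (sincr_ge hphi n).
have claim : forall v, Veta v -> `|v| != 0 -> ((A (u - ustar) v / `|v|)%:E <= L)%E.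
  move=> v Vv nv.
  have vp : 0 < `|v| by rewrite lt_neqAle eq_sym nv normr_ge0.
  have cvA : (fun n => A (u - wn (phi n)) v / `|v|) @ \oo --> A (u - ustar) v / `|v|.
    have := hw _ (bil_dual hA hM v) => hw'.
    rewrite bilB1 //.
    have -> : (fun n => A (u - wn (phi n)) v / `|v|) =
              (fun n => (A u v - A (wn (phi n)) v) * `|v|^-1).
      by apply: funext => n; rewrite bilB1.
    apply: cvgM; last exact: cvg_cst.
    by apply: cvgB => //; exact: cvg_cst.
  apply/lee_subgt0Pr => e e0; rewrite -EFinB.
  apply: (cvge_to_ge hsig).
  move/cvgrPdist_lt : cvA => /(_ e e0); apply: filterS => n hn.
  rewrite lee_fin; apply: le_trans (_ : A (u - wn (phi n)) v / `|v| <= _).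
    by move: hn; rewrite ltr_distlC => /andP[/ltW].
  by rewrite ler_pdivrMr //; apply: opnorm_ge.
move: claim hcv hsig; case: L => [r | | ] cl _ _.
- rewrite lee_fin; apply: ge_sup; first by exists (A (u - ustar) v0 / `|v0|), v0.
  by move=> _ [v [Vv nv] <-]; rewrite -lee_fin; apply: cl.
- exact: leey.
- by have := cl v0 Vv0 nv0; rewrite leeNy_eq.
Qed.
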